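(* Let $A$ be a commutative noetherian local ring and let $x,y\in A$ be a regular exact pair of zero divisors. Let $a,b\in A$ be such that $a$ or $b$ is weakly regular on the $A$-module $A/(x,y)$. Then there are $A$-module isomorphisms (a) $\operatorname{Hom}_A(H_a,G_b)\cong\operatorname{Hom}_A(H_b,G_a)\cong G_{ab}$, and (b) $\operatorname{Hom}_A(G_a,H_b)\cong\operatorname{Hom}_A(G_b,H_a)\cong H_{ab}$.
   Context: Two non-units $x,y\in A$ form an exact pair of zero divisors if $\operatorname{Ann}_A(x)=(y)$ and $\operatorname{Ann}_A(y)=(x)$; such a pair is regular if $(x)\cap(y)=0$. An element $a\in A$ is weakly regular on a module $M$ if multiplication by $a$ on $M$ is injective. For $a\in A$, let $\gamma_a=\begin{pmatrix} x & a\\ 0 & y\end{pmatrix}$ and $\eta_a=\begin{pmatrix} y & -a\\ 0 & x\end{pmatrix}$, viewed as $A$-linear maps $A^2\to A^2$ acting on column vectors, and set $G_a=\operatorname{Coker}\gamma_a$, $H_a=\operatorname{Coker}\eta_a$. *)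

(* Defs.v *)
From HB Require Import structures.
From mathcomp Require Import all_boot all_order all_algebra.
Set Implicit Arguments. Unset Strict Implicit. Unset Printing Implicit Defensive.
Import GRing.Theory.
Local Open Scope ring_scope.

Section Defs.
Variable A : comUnitRingType.

Definition is_ideal (I : A -> Prop) : Prop :=
  [/\ I 0, (forall u v, I u -> I v -> I (u + v)) & (forall r u, I u -> I (r * u))].

Definition fin_gen (I : A -> Prop) : Prop :=
  exists n (g : 'I_n -> A),
    forall u, I u <-> exists c : 'I_n -> A, u = \sum_(i < n) c i * g i.

Definition noetherian : Prop := forall I, is_ideal I -> fin_gen I.

Definition maximal_ideal (M : A -> Prop) : Prop :=
  [/\ is_ideal M, ~ M 1 &
      forall J, is_ideal J -> (forall u, M u -> J u) ->
        (forall u, J u <-> M u) \/ J 1].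

Definition local_ring : Prop :=
  exists M, maximal_ideal M /\
    forall M', maximal_ideal M' -> forall u, M' u <-> M u.

Definition pideal (z : A) (u : A) : Prop := exists s, u = s * z.
Definition ann (z : A) (u : A) : Prop := u * z = 0.

Definition exact_pair (x y : A) : Prop :=
  [/\ x \isn't a GRing.unit, y \isn't a GRing.unit,
      (forall u, ann x u <-> pideal y u) & (forall u, ann y u <-> pideal x u)].

Definition regular_exact_pair (x y : A) : Prop :=
  exact_pair x y /\ (forall u, pideal x u -> pideal y u -> u = 0).

Definition weakly_regular (M : lmodType A) (a : A) : Prop :=
  injective (fun m : M => a *: m).

Definition is_coker (U V W : lmodType A) (f : U -> V) (p : {linear V -> W}) : Prop :=
  (forall w, exists v, p v = w) /\ (forall v, p v = 0 <-> exists u, v = f u).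

Definition mx22 (p q r s : A) : 'M[A]_2 :=
  \matrix_(i < 2, j < 2)
    if i == 0 :> nat then (if j == 0 :> nat then p else q)
    else (if j == 0 :> nat then r else s).

Definition gamma_mx (x y a : A) : 'M[A]_2 := mx22 x a 0 y.
Definition eta_mx (x y a : A) : 'M[A]_2 := mx22 y (- a) 0 x.

(* the map A^2 -> A, (s,t) |-> s x + t y, whose cokernel is A/(x,y) *)
Definition gen2 (x y : A) (v : 'cV[A]_2) : A^o := v 0 0 * x + v 1 0 * y.

(* Hom_A(H, G) ≅ N as A-modules, where Hom_A(H,G) carries the pointwise
   A-module structure on A-linear maps H -> G *)
Definition hom_iso (H G N : lmodType A) : Prop :=
  exists Phi : {linear H -> G} -> N,
    [/\ bijective Phi,
        (forall f g h : {linear H -> G},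
            (forall z, h z = f z + g z) -> Phi h = Phi f + Phi g) &
        (forall (r : A) (f h : {linear H -> G}),
            (forall z, h z = r *: f z) -> Phi h = r *: Phi f)].

End Defs.

(* Main.v *)
Require Import Defs.
From HB Require Import structures.
From mathcomp Require Import all_boot all_order all_algebra.
From mathcomp Require Import ring.
From Stdlib Require Import FunctionalExtensionality ProofIrrelevance ClassicalEpsilon.
Local Open Scope ring_scope.
Import GRing.Theory.

Definition cv2 {A : comUnitRingType} (u v : A) : 'cV[A]_2 :=
  \col_(i < 2) (if i == 0 :> nat then u else v).

Lemma cv2E (A : comUnitRingType) (w : 'cV[A]_2) : w = cv2 (w 0 0) (w 1 0).
Proof.
apply/matrixP=> i j; rewrite !mxE (ord1 j).
by case: i => [[|[|i]] Hi] //=; congr (w _ _); apply: val_inj.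
Qed.

Lemma mx22_mul (A : comUnitRingType) (p q r t u v : A) :
  mx22 p q r t *m cv2 u v = cv2 (p * u + q * v) (r * u + t * v).
Proof.
apply/matrixP=> i j; rewrite !mxE big_ord_recl big_ord1 !mxE /=.
by case: i => [[|[|i]] Hi].
Qed.

Lemma cv2D (A : comUnitRingType) (u v u' v' : A) :
  cv2 u v + cv2 u' v' = cv2 (u + u') (v + v').
Proof. by apply/matrixP=> i j; rewrite !mxE; case: ifP. Qed.

Lemma cv2Z (A : comUnitRingType) (k u v : A) :
  k *: cv2 u v = cv2 (k * u) (k * v).
Proof. by apply/matrixP=> i j; rewrite !mxE; case: ifP. Qed.

Lemma cv2_split (A : comUnitRingType) (u v : A) :
  cv2 u v = u *: cv2 1 0 + v *: cv2 0 1.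
Proof. by rewrite !cv2Z cv2D !mulr1 !mulr0 addr0 add0r. Qed.

Lemma coker_zero (A : comUnitRingType) (M : lmodType A) (p q t : A)
  (pM : {linear 'cV[A]_2 -> M}) :
  is_coker (mulmx (mx22 p q 0 t)) pM ->
  forall u v, pM (cv2 u v) = 0 <-> exists k l, u = p * k + q * l /\ v = t * l.
Proof.
move=> [_ H] u v; rewrite H; split.
  move=> [w]; rewrite [w]cv2E mx22_mul => /matrixP E.
  exists (w 0 0), (w 1 0); move: (E 0 0) (E 1 0); rewrite !mxE /= => -> ->.
  by rewrite mul0r add0r.
move=> [k [l [-> ->]]]; exists (cv2 k l); by rewrite mx22_mul mul0r add0r.
Qed.

Lemma coker_split (A : comUnitRingType) (M : lmodType A)
  (pM : {linear 'cV[A]_2 -> M}) u v :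
  pM (cv2 u v) = u *: pM (cv2 1 0) + v *: pM (cv2 0 1).
Proof. by rewrite cv2_split linearD !linearZ. Qed.
Arguments coker_zero {A M p q t pM}.
Arguments coker_split {A M} pM u v.

Lemma lift_exists (A : comUnitRingType) (H G : lmodType A) (m11 m12 m22 : A)
  (pH : {linear 'cV[A]_2 -> H}) (cH : is_coker (mulmx (mx22 m11 m12 0 m22)) pH)
  (g1 g2 : G) (r1 : m11 *: g1 = 0) (r2 : m12 *: g1 + m22 *: g2 = 0) :
  exists f : {linear H -> G}, forall u v, f (pH (cv2 u v)) = u *: g1 + v *: g2.
Proof.
pose val0 (w : 'cV[A]_2) := w 0 0 *: g1 + w 1 0 *: g2.
have val0_lin : forall k w w', val0 (k *: w + w') = k *: val0 w + val0 w'.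
  move=> k w w'; rewrite /val0 !mxE scalerDr !scalerA !scalerDl.
  by rewrite -!addrA; congr (_ + _); rewrite addrCA.
have val0_ker : forall w, pH w = 0 -> val0 w = 0.
  move=> w; rewrite [w]cv2E (coker_zero cH) => -[k [l [E1 E2]]].
  rewrite /val0 -cv2E E1 E2 scalerDl (mulrC m11) (mulrC m12) (mulrC m22).
  by rewrite -!scalerA r1 scaler0 add0r -scalerDr r2 scaler0.
have val0_eq : forall w w', pH w = pH w' -> val0 w = val0 w'.
  move=> w w' E; apply/eqP; rewrite -subr_eq0.
  have -> : val0 w - val0 w' = val0 ((-1) *: w' + w).
    by rewrite val0_lin scaleN1r addrC.
  by rewrite val0_ker // linearD linearZ /= E scaleN1r addNr.
have surj := proj1 cH.
pose F (h : H) := val0 (proj1_sig (constructive_indefinite_description _ (surj h))).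
have FpH : forall w, F (pH w) = val0 w.
  move=> w; rewrite /F; case: constructive_indefinite_description => /= w' E.
  exact: val0_eq.
have linF : linear F.
  move=> k h h'; case: (surj h) => w <-; case: (surj h') => w' <-.
  by rewrite -linearZ -linearD !FpH val0_lin.
pose flM := GRing.isLinear.Build _ _ _ _ F linF.
pose fL : {linear _ -> _} := HB.pack F flM.
exists fL => u v /=; by rewrite FpH /val0 !mxE.
Qed.
Arguments lift_exists {A H G m11 m12 m22 pH} cH {g1 g2} r1 r2.

Lemma coker_surj (A : comUnitRingType) (M : lmodType A) (m11 m12 m22 : A)
  (pM : {linear 'cV[A]_2 -> M}) :
  is_coker (mulmx (mx22 m11 m12 0 m22)) pM -> forall g, exists u v, g = pM (cv2 u v).
Proof. by move=> [S _] g; case: (S g) => w <-; exists (w 0 0), (w 1 0); rewrite -cv2E. Qed.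

Arguments coker_surj {A M m11 m12 m22 pM}.

Lemma lin_ext (R : comUnitRingType) (U V : lmodType R) (f g : {linear U -> V}) :
  (forall z, f z = g z) -> f = g.
Proof.
case: f => [f [[fa] [fs]]]; case: g => [g [[ga] [gs]]] /= e.
have eq : f = g by apply: functional_extensionality.
subst g. by rewrite (proof_irrelevance _ fa ga) (proof_irrelevance _ fs gs).
Qed.

Lemma coker_eq (A : comUnitRingType) (M : lmodType A) (pM : {linear 'cV[A]_2 -> M}) u v u' v' :
  pM (cv2 (u - u') (v - v')) = 0 -> pM (cv2 u v) = pM (cv2 u' v').
Proof.
move=> E; apply/eqP; rewrite -subr_eq0 -linearB /=.
by rewrite -scaleN1r cv2Z cv2D !mulN1r E.
Qed.

Lemma coker_sub (A : comUnitRingType) (M : lmodType A) (pM : {linear 'cV[A]_2 -> M}) u v u' v' :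
  pM (cv2 u v) - pM (cv2 u' v') = pM (cv2 (u - u') (v - v')).
Proof. by rewrite -linearB /= -scaleN1r cv2Z cv2D !mulN1r. Qed.

Lemma main (A : comUnitRingType) (x y c d e s : A) (H G N : lmodType A)
  (pH : {linear 'cV[A]_2 -> H}) (pG : {linear 'cV[A]_2 -> G}) (pN : {linear 'cV[A]_2 -> N})
  (annx : forall u, u * x = 0 <-> exists k, u = k * y)
  (anny : forall u, u * y = 0 <-> exists k, u = k * x)
  (reg : forall u, (exists k, u = k * x) -> (exists k, u = k * y) -> u = 0)
  (ss : s * s = 1) (he : e = - (s * c * d))
  (wr : (forall r, (exists p q, c * r = p * x + q * y) -> exists p q, r = p * x + q * y) \/
        (forall r, (exists p q, d * r = p * x + q * y) -> exists p q, r = p * x + q * y))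
  (cH : is_coker (mulmx (mx22 y c 0 x)) pH) (cG : is_coker (mulmx (mx22 x d 0 y)) pG)
  (cN : is_coker (mulmx (mx22 x e 0 y)) pN) : hom_iso H G N.
Proof.
have xy0 : x * y = 0 by apply/anny; exists 1; rewrite mul1r.
set h1 := pH (cv2 1 0); set h2 := pH (cv2 0 1).
set f1 := pG (cv2 1 0); set f2 := pG (cv2 0 1).
have splitG := coker_split pG.
have zG := coker_zero cG.
have zN := coker_zero cN.
pose Rel (n : N) (f : {linear H -> G}) := exists al be, n = pN (cv2 al be) /\
   f h1 = (s * be * x) *: f2 /\ f h2 = al *: f1 - (s * be * c) *: f2.
have RelU : forall n n' f, Rel n f -> Rel n' f -> n = n'.
  move=> n n' f [al [be [-> [F1 F2]]]] [al' [be' [-> [F1' F2']]]].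
  apply: coker_eq; apply/zN.
  have E1 : pG (cv2 0 (s * (be - be') * x)) = 0.
    rewrite splitG scale0r add0r.
    have -> : s * (be - be') * x = s * be * x - s * be' * x by ring.
    by rewrite scalerBl -F1 -F1' subrr.
  move/zG: E1 => [k [l [Ek El]]].
  have : s * (be - be') * x = 0.
    apply: reg; first by exists (s * (be - be')).
    by exists l; rewrite El mulrC.
  move/annx => [k1 Ek1].
  have E2 : pG (cv2 (al - al') (- (s * (be - be') * c))) = 0.
    rewrite splitG.
    have -> : - (s * (be - be') * c) = - (s * be * c) + s * be' * c by ring.
    rewrite scalerBl scalerDl scaleNr.
    have -> : al *: f1 - al' *: f1 + (- ((s * be * c) *: f2) + (s * be' * c) *: f2)
      = (al *: f1 - (s * be * c) *: f2) - (al' *: f1 - (s * be' * c) *: f2).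
      by rewrite opprB addrACA; congr (_ + _); rewrite addrC.
    by rewrite -F2 -F2' subrr.
  move/zG: E2 => [k3 [l3 [Ek3 El3]]].
  have : (l3 + k1 * c) * y = 0.
    have : - (s * (be - be') * c) = y * l3 by [].
    rewrite Ek1 => E; rewrite mulrDl (mulrC l3) -E; ring.
  move/anny => [m Em].
  exists (k3 + d * m), (s * k1); split.
    rewrite Ek3 he. have El3' : l3 = m * x - k1 * c by rewrite -Em; ring.
    rewrite El3'; ring: ss.
  have : (be - be') = s * s * (be - be') by rewrite ss mul1r.
  move=> ->; have -> : s * s * (be - be') = s * (s * (be - be')) by ring.
  rewrite Ek1; ring.
have xf1 : x *: f1 = 0.
  have E : pG (cv2 x 0) = 0 by apply/zG; exists 1, 0; split; ring.
  have S := splitG x 0; rewrite scale0r addr0 in S; rewrite -S; exact: E.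
have df1 : d *: f1 + y *: f2 = 0.
  have E : pG (cv2 d y) = 0 by apply/zG; exists 0, 1; split; ring.
  have S := splitG d y; rewrite -S; exact: E.
have zH := coker_zero cH.
have yh1 : y *: h1 = 0.
  have E : pH (cv2 y 0) = 0 by apply/zH; exists 1, 0; split; ring.
  have S := coker_split pH y 0; rewrite scale0r addr0 in S; rewrite -S; exact: E.
have ch1 : c *: h1 + x *: h2 = 0.
  have E : pH (cv2 c x) = 0 by apply/zH; exists 0, 1; split; ring.
  have S := coker_split pH c x; rewrite -S; exact: E.
have RelI : forall n f f', Rel n f -> Rel n f' -> f = f'.
  move=> n f f' [al [be [-> [F1 F2]]]] [al' [be' [E [F1' F2']]]].
  have : pN (cv2 (al - al') (be - be')) = 0.
    by rewrite -coker_sub E subrr.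
  move/zN => [s2 [t2 [Ea Eb]]].
  have G1 : f h1 = f' h1.
    rewrite F1 F1'; apply/eqP; rewrite -subr_eq0 -scalerBl; apply/eqP.
    have -> : s * be * x - s * be' * x = s * (y * t2) * x by rewrite -Eb; ring.
    have -> : s * (y * t2) * x = 0 by ring: xy0.
    by rewrite scale0r.
  have G2 : f h2 = f' h2.
    rewrite F2 F2'; apply/eqP; rewrite -subr_eq0; apply/eqP.
    have -> : al *: f1 - (s * be * c) *: f2 - (al' *: f1 - (s * be' * c) *: f2)
       = pG (cv2 (al - al') (- (s * (be - be') * c))).
      rewrite splitG -/f1 -/f2.
      have -> : - (s * (be - be') * c) = s * be' * c - s * be * c by ring.
      rewrite !scalerBl opprB addrACA [RHS]addrACA; congr (_ + _); exact: addrC.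
    apply/zG; exists s2, (- (s * t2 * c)); split.
      by rewrite Ea he; ring.
    by rewrite Eb; ring.
  have fg : forall z, f z = f' z.
    move=> z; case: (coker_surj cH z) => u [v ->].
    by rewrite coker_split !linearD !linearZ /= -/h1 -/h2 G1 G2.
  exact: lin_ext.
have RelE : forall f, exists n, Rel n f.
  move=> f.
  case: (coker_surj cG (f h1)) => u1 [v1 Eg1].
  case: (coker_surj cG (f h2)) => u2 [v2 Eg2].
  have Y1 : pG (cv2 (y * u1) (y * v1)) = 0.
    by rewrite -cv2Z linearZ /= -Eg1 -linearZ /= yh1 linear0.
  have Y2 : pG (cv2 (c * u1 + x * u2) (c * v1 + x * v2)) = 0.
    rewrite -cv2D -!cv2Z linearD !linearZ /= -Eg1 -Eg2.
    transitivity (f (c *: h1 + x *: h2)); first by rewrite linearD !linearZ.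
    by rewrite ch1 linear0.
  move/zG: Y1 => [k [l [Ek El]]].
  move/zG: Y2 => [k2 [l2 [Ek2 El2]]].
  have : (v1 - l) * y = 0 by rewrite mulrBl mulrC El; ring.
  move/anny => [k' Ek'].
  have [p [q Ev1]] : exists p q, v1 = p * x + q * y.
    case: wr => W; apply: W.
      by exists (- v2), l2; rewrite -[c * v1](addrK (x * v2)) El2; ring.
    exists (d * k' - k), u1.
    have El' : l = v1 - k' * x by rewrite -Ek'; ring.
    rewrite El' in Ek; ring: Ek.
  have : (u1 - d * q) * y = 0.
    apply: reg; last by exists (u1 - d * q).
    exists (k + d * p - d * k').
    have El' : l = v1 - k' * x by rewrite -Ek'; ring.
    rewrite El' Ev1 in Ek; ring: Ek xy0.
  move/anny => [k2' Eu1].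
  have : (c * p + v2) * x = 0.
    apply: reg; first by exists (c * p + v2).
    exists (l2 - c * q).
    rewrite Ev1 in El2; apply/eqP; rewrite -subr_eq0; apply/eqP.
    transitivity (c * (p * x + q * y) + x * v2 - y * l2); first by ring.
    by rewrite El2 subrr.
  move/annx => [r Er].
  exists (pN (cv2 (u2 - d * r) (s * p))), (u2 - d * r), (s * p); split => //; split.
    rewrite Eg1.
    have -> : s * (s * p) * x = p * x by rewrite mulrA ss mul1r.
    have S := splitG 0 (p * x); rewrite scale0r add0r in S; rewrite -S.
    apply: coker_eq; apply/zG; exists k2', q; split.
      rewrite subr0; have -> : u1 = u1 - d * q + d * q by ring.
      by rewrite Eu1; ring.
      by rewrite Ev1; ring.
  rewrite Eg2.
  have -> : s * (s * p) * c = p * c by rewrite mulrA ss mul1r.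
  have S := splitG (u2 - d * r) (- (p * c)); rewrite scaleNr in S; rewrite -S.
  apply: coker_eq; apply/zG; exists 0, r; split.
    ring.
  transitivity (c * p + v2); first by ring.
  by rewrite Er; ring.
have RelS : forall n, exists f, Rel n f.
  move=> n; case: (coker_surj cN n) => al [be ->].
  have r1 : y *: ((s * be * x) *: f2) = 0.
    by rewrite scalerA (_ : y * (s * be * x) = 0) ?scale0r //; ring: xy0.
  have r2 : c *: ((s * be * x) *: f2) + x *: (al *: f1 - (s * be * c) *: f2) = 0.
    rewrite scalerBr !scalerA (mulrC x al) -(scalerA al x) xf1 scaler0 add0r.
    rewrite (_ : x * (s * be * c) = c * (s * be * x)) ?subrr //; ring.
  case: (lift_exists cH r1 r2) => f Hf.
  exists f, al, be; split => //; split.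
    by rewrite /h1 Hf scale1r scale0r addr0.
  by rewrite /h2 Hf scale1r scale0r add0r.
pose Phi (f : {linear H -> G}) := proj1_sig (constructive_indefinite_description _ (RelE f)).
have PhiR : forall f, Rel (Phi f) f.
  by move=> f; rewrite /Phi; case: constructive_indefinite_description.
pose Psi (n : N) := proj1_sig (constructive_indefinite_description _ (RelS n)).
have PsiR : forall n, Rel n (Psi n).
  by move=> n; rewrite /Psi; case: constructive_indefinite_description.
exists Phi; split.
- exists Psi => [f|n].
    by apply: (RelI (Phi f)); [apply: PsiR | apply: PhiR].
  by apply: (RelU _ _ (Psi n)); [apply: PhiR | apply: PsiR].
- move=> f g h Hh; apply: (RelU _ _ h); first exact: PhiR.
  case: (PhiR f) => al [be [E1 [F1 F2]]]; case: (PhiR g) => al' [be' [E1' [F1' F2']]].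
  exists (al + al'), (be + be'); split; first by rewrite E1 E1' -linearD /= cv2D.
  rewrite !Hh F1 F1' F2 F2'; split.
    by rewrite -scalerDl; congr (_ *: _); ring.
  have -> : s * (be + be') * c = s * be * c + s * be' * c by ring.
  by rewrite !scalerDl opprD addrACA.
- move=> r f h Hh; apply: (RelU _ _ h); first exact: PhiR.
  case: (PhiR f) => al [be [E1 [F1 F2]]].
  exists (r * al), (r * be); split; first by rewrite E1 -linearZ /= cv2Z.
  rewrite !Hh F1 F2 scalerBr !scalerA; split; first by congr (_ *: _); ring.
  by congr (_ *: _ - _ *: _); ring.
Qed.

Definition WR {A : comUnitRingType} (x y a : A) :=
  forall r, (exists p q, a * r = p * x + q * y) -> exists p q, r = p * x + q * y.

Lemma WR_neg (A : comUnitRingType) (x y a : A) : WR x y a -> WR x y (- a).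
Proof.
move=> W r [p [q E]]; apply: W; exists (- p), (- q).
by rewrite -[a * r]opprK -mulNr E; ring.
Qed.

Lemma WR_swap (A : comUnitRingType) (x y a : A) : WR x y a -> WR y x a.
Proof.
move=> W r [p [q E]]; case: (W r) => [|p' [q' ->]]; first by exists q, p; rewrite E addrC.
by exists q', p'; rewrite addrC.
Qed.

Lemma WR_of (A : comUnitRingType) (x y a : A) (Q : lmodType A) (pQ : {linear A^o -> Q}) :
  is_coker (gen2 x y) pQ -> weakly_regular Q a -> WR x y a.
Proof.
move=> [_ K] W r [p [q E]].
have Z : forall t : A, (exists p q, t = p * x + q * y) -> pQ t = 0.
  move=> t [p' [q' ->]]; apply/K; exists (cv2 p' q').
  by rewrite /gen2 !mxE.
have : pQ r = 0.
  apply: W => /=; rewrite scaler0 -linearZ /=.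
  have -> : a *: (r : A^o) = a * r by [].
  by apply: Z; exists p, q.
move/K => [u ->]; by exists (u 0 0), (u 1 0).
Qed.

Arguments WR_of {A x y a Q pQ}.
Arguments main {A x y c d e s H G N pH pG pN}.

Theorem theorem7p5 (A : comUnitRingType) (x y a b : A)
  (Q Ga Gb Gab Ha Hb Hab : lmodType A)
  (pQ : {linear A^o -> Q})
  (pGa : {linear 'cV[A]_2 -> Ga}) (pGb : {linear 'cV[A]_2 -> Gb})
  (pGab : {linear 'cV[A]_2 -> Gab})
  (pHa : {linear 'cV[A]_2 -> Ha}) (pHb : {linear 'cV[A]_2 -> Hb})
  (pHab : {linear 'cV[A]_2 -> Hab}) :
  noetherian A -> local_ring A -> regular_exact_pair x y ->
  is_coker (gen2 x y) pQ ->
  is_coker (mulmx (gamma_mx x y a)) pGa -> is_coker (mulmx (gamma_mx x y b)) pGb ->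
  is_coker (mulmx (gamma_mx x y (a * b))) pGab ->
  is_coker (mulmx (eta_mx x y a)) pHa -> is_coker (mulmx (eta_mx x y b)) pHb ->
  is_coker (mulmx (eta_mx x y (a * b))) pHab ->
  weakly_regular Q a \/ weakly_regular Q b ->
  (hom_iso Ha Gb Gab /\ hom_iso Hb Ga Gab) /\
  (hom_iso Ga Hb Hab /\ hom_iso Gb Ha Hab).
Proof.
move=> _ _ [[_ _ annx anny] reg] cQ cGa cGb cGab cHa cHb cHab wrQ.
have reg' : forall u, (exists k, u = k * y) -> (exists k, u = k * x) -> u = 0.
  by move=> u H1 H2; apply: reg.
have W : WR x y a \/ WR x y b.
  by case: wrQ => W; [left | right]; apply: (WR_of cQ).
have ss1 : (1 : A) * 1 = 1 by rewrite mulr1.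
have ssm : (-1 : A) * -1 = 1 by rewrite mulrNN mulr1.
split; split.
- apply: (main annx anny reg ss1 _ _ cHa cGb cGab); first by ring.
  by case: W => W; [left; apply: WR_neg | right].
- apply: (main annx anny reg ss1 _ _ cHb cGa cGab); first by ring.
  by case: W => W; [right | left; apply: WR_neg].
- apply: (main anny annx reg' ssm _ _ cGa cHb cHab); first by ring.
  by case: W => W; [left; apply: WR_swap | right; apply/WR_swap/WR_neg].
- apply: (main anny annx reg' ssm _ _ cGb cHa cHab); first by ring.
  by case: W => W; [right; apply/WR_swap/WR_neg | left; apply: WR_swap].
Qed.
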